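(* Let $\phi$ be a strictly convex norm on $\mathbf{R}^n$ of class $\mathcal{C}^2$ on $\mathbf{R}^n\setminus\{0\}$, $K\subseteq\mathbf{R}^n$ closed, $\sigma>1$, and $K_\sigma=\{x:\rho^\phi_K(x)\ge\sigma\}\setminus K$. For $t\in\mathbf{R}$ let $h_t$ be the multivalued map $h_t(y)=ty+(1-t)\xi^\phi_K(y)=\{ty+(1-t)a:a\in\xi^\phi_K(y)\}$. Then for every $0<t<\sigma$, $h_t|K_\sigma$ is (single-valued and) a homeomorphism of $K_\sigma$ onto $K_{\sigma/t}$ with inverse $h_{1/t}|K_{\sigma/t}$.
   Context: A norm $\phi$ is strictly convex if $\phi(a+b)=\phi(a)+\phi(b)$ implies $\phi(b)a=\phi(a)b$. For closed $K$: $\delta^\phi_K(x)=\inf\{\phi(y-x):y\in K\}$; $\xi^\phi_K(x)=K\cap\{w:\phi(x-w)=\delta^\phi_K(x)\}$; $\rho^\phi_K(x)=\sup\bigl(\mathbf{R}\cap\{s:\delta^\phi_K(a+s(x-a))=s\,\delta^\phi_K(x)\}\bigr)$ for any $a\in\xi^\phi_K(x)$ (independent of the choice of $a$). For any $\tau\ge1$, $K_\tau=\{x:\rho^\phi_K(x)\ge\tau\}\setminus K$. *)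

(* Defs.v *)
From HB Require Import structures.
From mathcomp Require Import all_boot all_order all_algebra.
From mathcomp Require Import all_classical all_reals all_analysis.
Set Implicit Arguments. Unset Strict Implicit. Unset Printing Implicit Defensive.
Import Order.TTheory GRing.Theory Num.Theory.
Import numFieldNormedType.Exports.
Local Open Scope classical_set_scope.
Local Open Scope ring_scope.

Section Defs.
Variables (R : realType) (n : nat).
Local Notation V := 'rV[R]_n.

Definition is_norm (phi : V -> R) : Prop :=
  [/\ forall x, phi x = 0 -> x = 0,
      forall (c : R) x, phi (c *: x) = `|c| * phi x
    & forall x y, phi (x + y) <= phi x + phi y].

Definition strictly_convex (phi : V -> R) : Prop :=
  forall a b, phi (a + b) = phi a + phi b -> phi b *: a = phi a *: b.

Definition evec (i : 'I_n) : V := delta_mx 0 i.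

Definition C2_on (U : set V) (f : V -> R) : Prop :=
  forall x, U x ->
    {for x, continuous f} /\
    forall i j : 'I_n,
      [/\ derivable f x (evec i),
          {for x, continuous (fun y => 'D_(evec i) f y)},
          derivable (fun y => 'D_(evec i) f y) x (evec j)
        & {for x, continuous (fun y => 'D_(evec j) (fun z => 'D_(evec i) f z) y)}].

Variable phi : V -> R.

Definition dist_fun (K : set V) (x : V) : R :=
  inf [set phi (y - x) | y in K].

Definition xi_fun (K : set V) (x : V) : set V :=
  K `&` [set w | phi (x - w) = dist_fun K x].

(* rho takes values in the extended reals (it may be +oo) *)
Definition rho_fun (K : set V) (x : V) : \bar R :=
  ereal_sup [set s%:E | s in [set s : R | exists2 a, xi_fun K x a &
      dist_fun K (a + s *: (x - a)) = s * dist_fun K x]].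

Definition K_tau (K : set V) (tau : R) : set V :=
  [set x | (tau%:E <= rho_fun K x)%E] `\` K.

Definition h_map (K : set V) (t : R) (y : V) : set V :=
  [set t *: y + (1 - t) *: a | a in xi_fun K y].

End Defs.

(* Main.v *)
Require Import Defs.
From HB Require Import structures.
From mathcomp Require Import all_boot all_order all_algebra.
From mathcomp Require Import all_classical all_reals all_analysis.
From mathcomp Require Import ring lra.
Set Implicit Arguments. Unset Strict Implicit. Unset Printing Implicit Defensive.
Import Order.TTheory GRing.Theory Num.Theory.
Import numFieldNormedType.Exports.
Local Open Scope classical_set_scope.
Local Open Scope ring_scope.
Section S.
Variables (R : realType) (n : nat) (phi : 'rV[R]_n -> R).
Hypothesis Hn : is_norm phi.
Local Notation V := 'rV[R]_n.

Lemma phiZ c x : phi (c *: x) = `|c| * phi x.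
Proof. by case: Hn. Qed.
Lemma phiD x y : phi (x + y) <= phi x + phi y.
Proof. by case: Hn. Qed.
Lemma phi_eq0 x : phi x = 0 -> x = 0.
Proof. by case: Hn => H _ _; apply: H. Qed.
Lemma phi0 : phi 0 = 0.
Proof. by rewrite -(scale0r (0:V)) phiZ normr0 mul0r. Qed.
Lemma phiN x : phi (- x) = phi x.
Proof. by rewrite -scaleN1r phiZ normrN1 mul1r. Qed.
Lemma phi_ge0 x : 0 <= phi x.
Proof.
have := phiD x (- x); rewrite subrr phi0 phiN => h.
by rewrite -(@pmulr_rge0 _ 2) // mulr2n mulrDl mul1r.
Qed.
Lemma phiB x y : phi (x - y) = phi (y - x).
Proof. by rewrite -opprB phiN. Qed.

Lemma coord_le (x : V) i : `|x 0 i| <= `|x|.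
Proof.
rewrite [leRHS]/Num.norm /= mx_normrE; apply/bigmax_geP; right => /=.
by exists (0, i).
Qed.

Lemma phi_sum (r : seq 'I_n) (F : 'I_n -> V) :
  phi (\sum_(i <- r) F i) <= \sum_(i <- r) phi (F i).
Proof.
elim: r => [|a r IH]; first by rewrite !big_nil phi0.
rewrite !big_cons; apply: le_trans (phiD _ _) _; exact: lerD.
Qed.

Definition Cphi := \sum_(i < n) phi (delta_mx 0 i).
Lemma Cphi_ge0 : 0 <= Cphi.
Proof. by apply: sumr_ge0 => i _; exact: phi_ge0. Qed.
Lemma phi_le (x : V) : phi x <= Cphi * `|x|.
Proof.
rewrite {1}[x]row_sum_delta; apply: le_trans (phi_sum _ _) _.
rewrite /Cphi mulr_suml; apply: ler_sum => i _.
by rewrite phiZ mulrC ler_wpM2l ?phi_ge0 ?coord_le.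
Qed.
Lemma phi_lip (x y : V) : `|phi x - phi y| <= Cphi * `|x - y|.
Proof.
apply: le_trans (phi_le _); rewrite ler_norml; apply/andP; split.
  rewrite lerBrDl phiB lerBlDr.
  by have := phiD x (y - x); rewrite [x + _]addrC subrK addrC.
by rewrite lerBlDr; have := phiD (x - y) y; rewrite subrK.
Qed.

Lemma near_ball (x : V) (P : V -> Prop) e : 0 < e ->
  (forall y, `|x - y| < e -> P y) -> \forall y \near x, P y.
Proof. by move=> e0 H; apply/nbhs_normP; exists e => //= y; exact: H. Qed.

Lemma phi_cont : continuous phi.
Proof.
move=> x; apply/(@cvgrPdist_lt _ R^o _ _ (nbhs_filter x)) => e e0.
have C1 : 0 < Cphi + 1 by apply: ltr_wpDl Cphi_ge0 _.
apply: (near_ball (e := e / (Cphi + 1))); first by rewrite divr_gt0.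
move=> y xy; apply: le_lt_trans (phi_lip x y) _.
apply: le_lt_trans (_ : (Cphi + 1) * `|x - y| < e).
  by rewrite ler_wpM2r // lerDl.
by rewrite mulrC -ltr_pdivlMr.
Qed.

Lemma closed_subl (f : V -> R) c : continuous f -> closed [set x | f x <= c].
Proof.
move=> cf x clx /=; rewrite leNgt; apply/negP => cx.
have [y [fy cy]] := clx _ (@cvgr_gt _ _ _ (nbhs_filter x) f (f x) (cf x) c cx).
by move: fy; rewrite /= leNgt cy.
Qed.

Lemma closed_supl (f : V -> R) c : continuous f -> closed [set x | c <= f x].
Proof.
move=> cf x clx /=; rewrite leNgt; apply/negP => cx.
have [y [fy cy]] := clx _ (@cvgr_lt _ _ _ (nbhs_filter x) f (f x) (cf x) c cx).
by move: fy; rewrite /= leNgt cy.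
Qed.

Lemma min_attained (A : set V) (f : V -> R) (m : R) : compact A -> continuous f ->
  (forall e, 0 < e -> exists2 b, A b & f b <= m + e) -> exists2 b, A b & f b <= m.
Proof.
move=> cA cf H.
pose B := fun e => A `&` [set b | f b <= m + e].
have FF : ProperFilter (filter_from [set e : R | 0 < e] B).
  apply: filter_from_proper.
    apply: filter_from_filter; first by exists (1:R) => /=; exact: ltr01.
    move=> i j i0 j0; exists (Num.min i j); first by rewrite /= lt_min i0 j0.
    move=> b [Ab fb]; split; split => //; apply: (le_trans fb);
      by rewrite lerD2l ge_min lexx ?orbT.
  by move=> e e0; have [b Ab fb] := H e e0; exists b.
have FA : filter_from [set e : R | 0 < e] B A.
  by exists 1; [exact: ltr01| move=> b []].
have [b [Ab cb]] := cA _ FF FA.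
exists b => //; apply/ler_addgt0Pr => e e0; rewrite leNgt; apply/negP => fbe.
have [c [[Ac fc] Nc]] := cb (B e) _ (ex_intro2 _ _ e e0 (fun b (h : B e b) => h)) (@cvgr_gt _ _ _ (nbhs_filter b) f (f b) (cf b) _ fbe).
by move: fc; rewrite /= leNgt Nc.
Qed.

Lemma phi_lb : exists2 c, 0 < c & forall x, c * `|x| <= phi x.
Proof.
case: (pselect (exists2 c, 0 < c & forall x : V, `|x| = 1 -> c <= phi x)).
  move=> [c c0 H]; exists c => // x.
  have [->|x0] := eqVneq x 0; first by rewrite normr0 mulr0 phi_ge0.
  have nx : 0 < `|x| by rewrite normr_gt0.
  have e : `|x| *: (`|x|^-1 *: x) = x by rewrite scalerA divff ?scale1r // gt_eqF.
  rewrite -{2}e phiZ normr_id mulrC ler_pM2l //; apply: H.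
  by rewrite normrZ normfV normr_id mulVf // gt_eqF.
move=> Hno; exfalso.
have cS : compact [set x : V | `|x| = 1].
  apply: bounded_closed_compact.
    by exists 1; split => // M M1 x /= ->; exact: ltW.
  have -> : [set x : V | `|x| = 1] = [set x | `|x| <= 1] `&` [set x | 1 <= `|x|].
    apply/seteqP; split => x /=; first by move=> ->.
    by case=> a b; apply/eqP; rewrite eq_le a b.
  apply: closedI; [exact: closed_subl norm_continuous|exact: closed_supl norm_continuous].
have [b Sb pb] : exists2 b, [set x : V | `|x| = 1] b & phi b <= 0.
  apply: min_attained cS phi_cont _ => e e0.
  apply: contrapT => hh; apply: Hno; exists e => // x x1.
  rewrite leNgt; apply/negP => pe; apply: hh; exists x => //; rewrite add0r ltW //.
have /phi_eq0 b0 : phi b = 0 by apply/eqP; rewrite eq_le pb phi_ge0.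
by move: Sb; rewrite /= b0 normr0 => /esym/eqP; rewrite oner_eq0.
Qed.

Lemma sup_ge (S : set R) c : 0 < c -> (forall r, 0 <= r -> r < c -> S r) ->
  (c%:E <= ereal_sup [set r%:E | r in S])%E.
Proof.
move=> c0 H; rewrite leNgt; apply/negP => hlt.
have h0 : (0%:E <= ereal_sup [set r%:E | r in S])%E.
  by apply: ereal_sup_ubound; exists 0 => //; apply: H.
move: hlt h0; case E: (ereal_sup _) => [u| |] //= hu h0.
have u0 : 0 <= u by rewrite -lee_fin.
have uc : u < c by rewrite -lte_fin.
have : (((u + c) / 2)%:E <= u%:E)%E.
  rewrite -E; apply: ereal_sup_ubound; exists ((u + c) / 2) => //.
  by apply: H; lra.
rewrite lee_fin; lra.
Qed.

Variable K : set V.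
Local Notation d := (dist_fun phi K).
Local Notation xi := (xi_fun phi K).

Lemma dist_le x y : K y -> d x <= phi (y - x).
Proof.
move=> Ky; apply: ge_inf; last by exists y.
by exists 0 => _ [z _ <-]; exact: phi_ge0.
Qed.

Lemma dist_ge0 x y : K y -> 0 <= d x.
Proof. by move=> Ky; apply: lb_le_inf; [exists (phi (y - x)), y|move=> _ [z _ <-]; exact: phi_ge0]. Qed.

Lemma dist_lip x x' y : K y -> d x <= d x' + phi (x - x').
Proof.
move=> Ky; rewrite -lerBlDr; apply: lb_le_inf; first by exists (phi (y - x')), y.
move=> _ [z Kz <-]; rewrite lerBlDr; apply: le_trans (dist_le x Kz) _.
by have := phiD (z - x') (x' - x); rewrite addrA subrK phiB [phi (x' - x)]phiB.
Qed.

Lemma seg_sub (a x : V) s s' : (a + s *: (x - a)) - (a + s' *: (x - a)) = (s - s') *: (x - a).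
Proof. by rewrite opprD addrACA subrr add0r scalerBl. Qed.
Lemma seg_subl (a x : V) s : (a + s *: (x - a)) - a = s *: (x - a).
Proof. by rewrite addrC addKr. Qed.
Lemma seg_subx (a x : V) s : (a + s *: (x - a)) - x = (s - 1) *: (x - a).
Proof. by rewrite -(seg_sub a x s 1) scale1r [a + (x - a)]addrC subrK. Qed.
Lemma seg_comp (a x : V) s t : a + s *: ((a + t *: (x - a)) - a) = a + (s * t) *: (x - a).
Proof. by rewrite seg_subl scalerA. Qed.

Lemma xi_K x a : xi x a -> K a.
Proof. by case. Qed.
Lemma xi_d x a : xi x a -> phi (x - a) = d x.
Proof. by case. Qed.

Lemma dist_seg_le x a s : xi x a -> 0 <= s -> d (a + s *: (x - a)) <= s * d x.
Proof.
move=> xa s0; apply: le_trans (dist_le _ (xi_K xa)) _.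
by rewrite phiB seg_subl phiZ ger0_norm // xi_d.
Qed.

Lemma seg_down x a s s' : xi x a -> 0 <= s' -> s' <= s ->
  d (a + s *: (x - a)) = s * d x -> d (a + s' *: (x - a)) = s' * d x.
Proof.
move=> xa s'0 ss' E; apply/eqP; rewrite eq_le dist_seg_le //=.
have := dist_lip (a + s *: (x - a)) (a + s' *: (x - a)) (xi_K xa).
rewrite seg_sub phiZ ger0_norm ?subr_ge0 // (xi_d xa) E mulrBl => h.
lra.
Qed.

Lemma dpos x a : ~ K x -> xi x a -> 0 < d x.
Proof.
move=> nK xa; rewrite lt_neqAle (dist_ge0 _ (xi_K xa)) andbT.
apply/negP => /eqP/esym d0; apply: nK.
have : x - a = 0 by apply: phi_eq0; rewrite xi_d.
by move/eqP; rewrite subr_eq0 => /eqP ->; exact: xi_K xa.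
Qed.

Hypothesis sc : strictly_convex phi.

Lemma xi_uniq x a b s : ~ K x -> xi x a -> xi x b -> 1 < s ->
  d (a + s *: (x - a)) = s * d x -> b = a.
Proof.
move=> nK xa xb s1 E.
have dp := dpos nK xa.
have hz : phi ((a + s *: (x - a)) - x) = (s - 1) * d x.
  by rewrite seg_subx phiZ ger0_norm ?subr_ge0 ?ltW // xi_d.
have eq1 : phi (((a + s *: (x - a)) - x) + (x - b)) = phi ((a + s *: (x - a)) - x) + phi (x - b).
  apply/eqP; rewrite eq_le phiD /= addrA subrK.
  have := dist_le (a + s *: (x - a)) (xi_K xb); rewrite phiB E hz xi_d // => h.
  by rewrite mulrBl mul1r subrK.
have := sc eq1; rewrite hz xi_d // seg_subx scalerA mulrC => /scalerI.
have -> : (s - 1) * d x != 0 by rewrite mulf_neq0 // gt_eqF ?subr_gt0.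
by move=> /(_ isT) /addrI /oppr_inj.
Qed.

Lemma Ktau_props tau y : 1 < tau -> K_tau phi K tau y ->
  exists a, [/\ xi y a, (forall b, xi y b -> b = a), ~ K y &
     forall s, 0 <= s -> s < tau -> d (a + s *: (y - a)) = s * d y].
Proof.
move=> t1 [hr nK].
have : (1%:E < rho_fun phi K y)%E by apply: lt_le_trans hr; rewrite lte_fin.
move/ereal_sup_gt => [_ [s [a xa Es] <-]]; rewrite lte_fin => s1.
have U : forall b, xi y b -> b = a := fun b xb => xi_uniq nK xa xb s1 Es.
exists a; split; [exact: xa| exact: U| exact: nK| move=> r r0 rt].
have : (r%:E < rho_fun phi K y)%E by apply: lt_le_trans hr; rewrite lte_fin.
move/ereal_sup_gt => [_ [s' [a' xa' Es'] <-]]; rewrite lte_fin => rs'.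
have ea := U _ xa'; rewrite ea in Es'.
exact: seg_down xa r0 (ltW rs') Es'.
Qed.

Lemma transfer tau t y a : 1 < tau -> 0 < t -> t < tau -> K_tau phi K tau y -> xi y a ->
  xi (a + t *: (y - a)) a /\ K_tau phi K (tau / t) (a + t *: (y - a)).
Proof.
move=> t1 t0 tt Ky xa.
have [a' [xa' U nK Hs]] := Ktau_props t1 Ky.
have ea := U _ xa; subst a'.
have dp := dpos nK xa.
have dz := Hs t (ltW t0) tt.
have xz : xi (a + t *: (y - a)) a.
  split; first exact: xi_K xa.
  by rewrite /= seg_subl phiZ gtr0_norm // (xi_d xa) dz.
split => //; split.
  rewrite /rho_fun; apply: sup_ge; first by rewrite divr_gt0 // (lt_trans ltr01 t1).
  move=> r r0 rt'; exists a => //; rewrite seg_comp dz mulrA; apply: Hs.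
    exact: mulr_ge0 r0 (ltW t0).
  by rewrite -ltr_pdivlMr.
move=> Kz; have := dist_le (a + t *: (y - a)) Kz; rewrite subrr phi0 dz.
by rewrite leNgt mulr_gt0.
Qed.

Lemma lip_cont (f : V -> R) L : 0 <= L -> (forall u v, `|f u - f v| <= L * `|u - v|) ->
  continuous f.
Proof.
move=> L0 hf x; apply/(@cvgrPdist_lt _ R^o _ _ (nbhs_filter x)) => e e0.
have C1 : 0 < L + 1 by apply: ltr_wpDl L0 _.
apply: (near_ball (e := e / (L + 1))); first by rewrite divr_gt0.
move=> y xy; apply: le_lt_trans (hf x y) _.
apply: le_lt_trans (_ : (L + 1) * `|x - y| < e).
  by rewrite ler_wpM2r // lerDl.
by rewrite mulrC -ltr_pdivlMr.
Qed.

Lemma cont_phix (x : V) : continuous (fun b : V => phi (x - b)).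
Proof.
apply: (@lip_cont _ Cphi Cphi_ge0) => u v; apply: le_trans (phi_lip _ _) _.
by rewrite opprB addrC addrA subrK distrC.
Qed.

Lemma cont_normx (x : V) : continuous (fun b : V => `|x - b|).
Proof.
apply: (@lip_cont _ 1 ler01) => u v; rewrite mul1r.
apply: le_trans (ler_dist_dist (x - u) (x - v)) _.
by rewrite opprB addrC addrA subrK distrC.
Qed.

Lemma cont_normxr (x : V) : continuous (fun b : V => `|b - x|).
Proof.
apply: (@lip_cont _ 1 ler01) => u v; rewrite mul1r.
apply: le_trans (ler_dist_dist (u - x) (v - x)) _.
by rewrite opprB addrA subrK.
Qed.

Lemma proj_cont (Kcl : closed K) x a : xi x a -> (forall b, xi x b -> b = a) ->
  forall e, 0 < e -> exists2 eta, 0 < eta &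
    forall x' b, `|x - x'| < eta -> xi x' b -> `|b - a| < e.
Proof.
move=> xa U e e0; apply: contrapT => Hno.
have [c c0 hc] := phi_lb.
pose M := (d x + 1) / c.
pose A := K `&` [set b | e <= `|b - a|] `&` [set b | `|x - b| <= M].
have cA : compact A.
  apply: bounded_closed_compact.
    exists (`|x| + M); split; first exact: num_real.
    move=> r hr b [[_ _] hb] /=.
    apply: ltW; apply: le_lt_trans hr.
    have -> : b = x - (x - b) by rewrite opprB addrC subrK.
    by apply: le_trans (ler_normB _ _) _; rewrite lerD2l.
  apply: closedI; first apply: closedI => //.
    exact: closed_supl (@cont_normxr a).
  exact: closed_subl (@cont_normx x).
have [b [[Kb eb] _] pb] : exists2 b, A b & phi (x - b) <= d x.
  apply: min_attained cA (@cont_phix x) _ => h h0.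
  pose h1 := Num.min h 1.
  have h10 : 0 < h1 by rewrite lt_min h0 ltr01.
  have h1h : h1 <= h by rewrite ge_min lexx.
  have h11 : h1 <= 1 by rewrite ge_min lexx orbT.
  pose L := 2 * Cphi + 1.
  have L0 : 0 < L by rewrite /L; have := Cphi_ge0; lra.
  have [x' [b [h2 h3 h4]]] : exists x' b, [/\ `|x - x'| < h1 / L, xi x' b & e <= `|b - a|].
    apply: contrapT => H2; apply: Hno; exists (h1 / L); first by rewrite divr_gt0.
    move=> x' b q1 q2; rewrite ltNge; apply/negP => q3; apply: H2; by exists x', b.
  have p1 := phi_le (x - x'); have p2 := phi_le (x' - x).
  rewrite distrC in p2.
  have dl := dist_lip x' x (xi_K xa).
  have tri : phi (x - b) <= phi (x - x') + phi (x' - b).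
    by have := phiD (x - x') (x' - b); rewrite addrA subrK.
  rewrite (xi_d h3) in tri.
  rewrite ltr_pdivlMr // in h2.
  have N0 : 0 <= `|x - x'| by [].
  have C0 := Cphi_ge0.
  have pxb : phi (x - b) <= d x + h1 by rewrite /L in h2; nra.
  exists b; last by apply: le_trans pxb _; rewrite lerD2l.
  split; first split => //; first exact: xi_K h3.
  rewrite /= /M ler_pdivlMr // mulrC; apply: le_trans (hc _) _.
  by apply: le_trans pxb _; rewrite lerD2l.
have xb : xi x b.
  split => //; apply/eqP; rewrite eq_le pb /= -phiB; exact: dist_le.
by move: eb; rewrite (U b xb) /= subrr normr0 leNgt e0.
Qed.

Definition proj (x : V) : V := xget 0 (xi x).
Definition F (t : R) (y : V) : V := t *: y + (1 - t) *: proj y.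

Lemma hlin (a y : V) t : t *: y + (1 - t) *: a = a + t *: (y - a).
Proof. by rewrite scalerBl scale1r scalerBr addrCA. Qed.

Lemma proj_props tau y : 1 < tau -> K_tau phi K tau y ->
  [/\ xi y (proj y), (forall b, xi y b -> b = proj y), ~ K y &
     forall s, 0 <= s -> s < tau -> d (proj y + s *: (y - proj y)) = s * d y].
Proof.
move=> t1 Ky; have [a [xa U nK Hs]] := Ktau_props t1 Ky.
have pa : proj y = a by apply: U; apply: xgetPex; exists a.
by rewrite pa.
Qed.

Lemma side (Kcl : closed K) tau t : 1 < tau -> 0 < t -> t < tau ->
 [/\ forall y, K_tau phi K tau y -> h_map phi K t y = [set F t y],
     forall y, K_tau phi K tau y -> K_tau phi K (tau / t) (F t y),
     forall y, K_tau phi K tau y -> F t^-1 (F t y) = y &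
     {within K_tau phi K tau, continuous (F t)}].
Proof.
move=> t1 t0 tt.
have t2 : 1 < tau / t by rewrite ltr_pdivlMr // mul1r.
split.
- move=> y Ky; have [xa U _ _] := proj_props t1 Ky.
  apply/seteqP; split => w /=.
    by move=> [a' xa' <-]; rewrite (U _ xa').
  by move=> ->; exists (proj y).
- move=> y Ky; have [xa U _ _] := proj_props t1 Ky.
  by rewrite /F hlin; case: (transfer t1 t0 tt Ky xa).
- move=> y Ky; have [xa U _ _] := proj_props t1 Ky.
  have [xz Kz] := transfer t1 t0 tt Ky xa.
  have [_ U' _ _] := proj_props t2 Kz.
  rewrite /F hlin -/(F t y) /F hlin -(U' _ xz) seg_subl scalerA mulVf ?gt_eqF //.
  by rewrite scale1r addrC subrK.
apply/subspace_continuousP => y Ky.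
have [xa U _ _] := proj_props t1 Ky.
apply/cvgrPdist_lt => eps eps0.
rewrite /within /= /from_subspace.
have Ut : 0 < `|1 - t| + 1 by apply: ltr_wpDl.
have Tt : 0 < `|t| + 1 by apply: ltr_wpDl.
have e1 : 0 < eps / 2 / (`|1 - t| + 1) by rewrite !divr_gt0.
have [eta eta0 Heta] := proj_cont Kcl xa U e1.
have H : \forall y' \near y, K_tau phi K tau y' -> `|F t y - F t y'| < eps.
  apply: (near_ball (e := Num.min eta (eps / 2 / (`|t| + 1)))).
    by rewrite lt_min eta0 !divr_gt0.
  move=> y' hy Ky'; have [xa' _ _ _] := proj_props t1 Ky'.
  move: hy; rewrite lt_min => /andP[hy1 hy2].
  have hq := Heta _ _ hy1 xa'.
  rewrite /F opprD addrACA -!scalerBr.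
  apply: le_lt_trans (ler_normD _ _) _; rewrite !normrZ [`|proj y - _|]distrC.
  rewrite ltr_pdivlMr // in hy2; rewrite ltr_pdivlMr // in hq.
  have p0 : 0 <= `|y - y'| by [].
  have q0 : 0 <= `|proj y' - proj y| by [].
  have a0 : 0 <= `|t| by [].
  have b0 : 0 <= `|1 - t| by [].
  nra.
exact: H.
Qed.
End S.

Theorem lemma2p34 (R : realType) (n : nat) (phi : 'rV[R]_n -> R)
  (K : set 'rV[R]_n) (sigma : R) :
  is_norm phi -> strictly_convex phi -> C2_on (~` [set 0]) phi ->
  closed K -> 1 < sigma ->
  forall t : R, 0 < t -> t < sigma ->
  exists f g : 'rV[R]_n -> 'rV[R]_n,
    (forall y, K_tau phi K sigma y -> h_map phi K t y = [set f y]) /\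
       (forall z, K_tau phi K (sigma / t) z -> h_map phi K t^-1 z = [set g z]) /\
       (forall y, K_tau phi K sigma y -> K_tau phi K (sigma / t) (f y)) /\
       (forall z, K_tau phi K (sigma / t) z -> K_tau phi K sigma (g z)) /\
       (forall y, K_tau phi K sigma y -> g (f y) = y) /\
       (forall z, K_tau phi K (sigma / t) z -> f (g z) = z) /\
       {within K_tau phi K sigma, continuous f} /\
       {within K_tau phi K (sigma / t), continuous g}.
Proof.
move=> Hn sc _ Kcl s1 t t0 ts.
have s2 : 1 < sigma / t by rewrite ltr_pdivlMr // mul1r.
have ti : t^-1 < sigma / t by rewrite ltr_pdivlMr // mulVf ?gt_eqF.
have e : sigma / t / t^-1 = sigma by rewrite invrK divfK ?gt_eqF.
have [A1 A2 A3 A4] := side Hn sc Kcl s1 t0 ts.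
have ti0 : 0 < t^-1 by rewrite invr_gt0.
have [B1 B2 B3 B4] := side Hn sc Kcl s2 ti0 ti.
rewrite e invrK in B2 B3.
exists (F phi K t), (F phi K t^-1).
split; first exact: A1. split; first exact: B1. split; first exact: A2.
split; first exact: B2. split; first exact: A3. split; first exact: B3.
by split.
Qed.
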